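(* Let $1\le p\le\infty$ and $1\le q<\infty$. The function $f:[0,1]\to\mathbb{R}$, $f(x)=x$, belongs to $\mathcal{H}_{1,p}$, but not to $\mathcal{H}_{\mathrm{wav},\alpha,p,q}$ for any $\alpha\ge1$. Thus $\mathcal{H}_{1,p}$ is not included in $\mathcal{H}_{\mathrm{wav},\alpha,p,q}$ for any $\alpha\ge1$.
   Context: $\mathcal{H}_{1,p}$ is the space of functions $f:[0,1]\to\mathbb{R}$ of the form $f(x)=c+\int_0^x\tilde f(t)\,dt$ with $c\in\mathbb{R}$ and $\tilde f\in L_p([0,1])$. Haar wavelet space for a fixed integer base $b\ge2$: $\Delta_{-1}=\{0\}$, $\Delta_j=\{0,\dots,b^j-1\}$ ($j\in\mathbb{N}_0$), $\nabla_0=\{0\}$, $\nabla_j=\{0,\dots,b-1\}$ ($j\ge1$); $\psi^0_{0,0}=1_{[0,1)}$ and for $j\ge1$, $i\in\nabla_j$, $k\in\Delta_{j-1}$: $\psi^j_{i,k}(x)=b^{j/2-1}(b\,1_{[b^{-j}(bk+i),b^{-j}(bk+i+1))}(x)-1_{[b^{1-j}k,b^{1-j}(k+1))}(x))$. For $q<\infty$, $\mathcal{H}_{\mathrm{wav},\alpha,p,q}$ is the space of $f\in L_1([0,1])$ with $\sum_{j=0}^\infty b^{q(\alpha-1/p+1/2)j}\big(\sum_{k\in\Delta_{j-1}}\sum_{i\in\nabla_j}|\int_0^1f\psi^j_{i,k}|^p\big)^{q/p}<\infty$ (inner $\ell_p$-sum replaced by a maximum if $p=\infty$). *)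

(* Defs.v *)
From HB Require Import structures.
From mathcomp Require Import all_boot all_order all_algebra.
From mathcomp Require Import all_classical all_reals all_analysis.
Set Implicit Arguments. Unset Strict Implicit. Unset Printing Implicit Defensive.
Import Order.TTheory GRing.Theory Num.Theory.
Local Open Scope classical_set_scope.
Local Open Scope ring_scope.

Section Defs.
Variable R : realType.
Notation mu := (@lebesgue_measure R).
Definition I01 : set R := `[0%R, 1%R].

(* g belongs to L_p([0,1]) for p in [1, +oo] (p : \bar R): measurable on [0,1]
   and finite L_p norm (g extended by 0 outside [0,1]; for p = +oo this
   is the essential supremum of |g| on [0,1]). *)
Definition inLp01 (p : \bar R) (g : R -> R) : Prop :=
  measurable_fun I01 g /\
  (Lnorm mu p (fun x => (if x \in I01 then g x else 0)%:E) < +oo)%E.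

Definition H1p (p : \bar R) (f : R -> R) : Prop :=
  exists (c : R) (g : R -> R), inLp01 p g /\
    forall x, x \in I01 -> f x = c + Rintegral mu (`[0%R, x] : set R) g.

Definition ind (a b x : R) : R := if (a <= x) && (x < b) then 1 else 0.

Definition haar (b j i k : nat) (x : R) : R :=
  if j is 0%N then ind 0 1 x else
  let B : R := b%:R in
  B `^ ((j%:R / 2) - 1) *
    (B * ind (B `^ (- j%:R) * (B * k%:R + i%:R))
             (B `^ (- j%:R) * (B * k%:R + i%:R + 1)) x
     - ind (B `^ (1 - j%:R) * k%:R) (B `^ (1 - j%:R) * (k%:R + 1)) x).

Definition nDelta (b j : nat) : nat := if j is j'.+1 then (b ^ j')%N else 1%N.
Definition nNabla (b j : nat) : nat := if j is 0%N then 1%N else b.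

Definition wcoef (b j i k : nat) (f : R -> R) : R :=
  Rintegral mu I01 (fun x => f x * haar b j i k x).

Definition invp (p : \bar R) : R := if p is r%:E then r^-1 else 0.

Definition level_term (b : nat) (p : \bar R) (q : R) (f : R -> R) (j : nat) : R :=
  match p with
  | r%:E => (\sum_(k < nDelta b j) \sum_(i < nNabla b j)
               `|wcoef b j i k f| `^ r) `^ (q / r)
  | _ => (\big[Num.max/0]_(k < nDelta b j) \big[Num.max/0]_(i < nNabla b j)
               `|wcoef b j i k f|) `^ q
  end.

Definition Hwav (b : nat) (alpha : R) (p : \bar R) (q : R) (f : R -> R) : Prop :=
  mu.-integrable I01 (EFin \o f) /\
  (\sum_(0 <= j <oo)
     ((b%:R `^ (q * (alpha - invp p + 2^-1) * j%:R)) * level_term b p q f j)%:E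
   < +oo)%E.

End Defs.

(* Main.v *)
Require Import Defs.
From HB Require Import structures.
From mathcomp Require Import all_boot all_order all_algebra.
From mathcomp Require Import all_classical all_reals all_analysis.
From mathcomp Require Import ring lra measurable_realfun.
Import Order.TTheory GRing.Theory Num.Theory.
Import numFieldNormedType.Exports.
Local Open Scope classical_set_scope.
Local Open Scope ring_scope.

Lemma indE (R : realType) (a c x : R) : ind a c x = \1_(`[a, c[ : set R) x.
Proof.
rewrite /ind indicE; case: ifP => h; [rewrite mem_set // /= in_itv /= h | rewrite memNset // /= in_itv /= h] => //.
Qed.
Local Notation mu := (@lebesgue_measure _).

Lemma is_deriveF (R : realType) (x : R) : is_derive x 1 (fun y : R => y ^+ 2 / 2) x.
Proof.
apply: is_derive_eq. rewrite !scaler0 add0r /GRing.scale /= mulr1; by field. Qed.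

Lemma int_x (R : realType) (a c : R) : a < c ->
  (\int[mu]_(x in `[a, c]) (x%:E) = ((c ^+ 2 - a ^+ 2) / 2)%:E)%E.
Proof.
move=> ac.
rewrite (@continuous_FTC2 _ (fun x => x) (fun y : R => y ^+ 2 / 2)) //.
- by rewrite -EFinB mulrBl.
- apply: derivable_within_continuous => x _.
  exact: derivable_id.
- have dF : forall x : R, derivable (fun y : R => y ^+ 2 / 2) x 1.
    move=> x; exact: (@ex_derive _ _ _ _ _ _ _ (is_deriveF _ x)).
  have cF : forall x : R, (y ^+ 2 / 2) @[y --> x] --> x ^+ 2 / 2.
    move=> x; have := dF x => /derivable1_diffP /differentiable_continuous; exact.
  split.
  + by move=> x _.
  + exact: cvg_at_right_filter (cF a).
  + exact: cvg_at_left_filter (cF c).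
- move=> x _; rewrite derive1E; exact: (@derive_val _ _ _ _ _ _ _ (is_deriveF _ x)).
Qed.

Lemma Rint_xind (R : realType) (a c : R) : 0 <= a -> a < c -> c <= 1 ->
  Rintegral mu (@I01 R) (fun x => x * ind a c x) = (c ^+ 2 - a ^+ 2) / 2.
Proof.
move=> a0 ac c1.
transitivity (Rintegral mu (@I01 R `&` `[a, c[) (fun x => x)).
  rewrite Rintegral_mkcondr; apply: eq_Rintegral => x _.
  by rewrite /patch indE indicE; case: (x \in _); rewrite ?mulr1 ?mulr0.
rewrite setIidr; last first.
  move=> x /=; rewrite !in_itv /= => /andP[ax xc].
  apply/andP; split; [exact: le_trans ax | exact: (le_trans (ltW xc))].
have icc : mu.-integrable `[a, c] (EFin \o (fun x : R => x)).
  apply: continuous_compact_integrable; first exact: segment_compact.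
  by apply: continuous_subspaceT => x; exact: cvg_id.
rewrite Rintegral_itv_bndo_bndc; last first.
  apply: integrableS icc => //; exact: subset_itv_co_cc.
by rewrite /Rintegral int_x.
Qed.

Lemma int_xind (R : realType) (r a c : R) :
  mu.-integrable (@I01 R) (EFin \o (fun x => r * (x * ind a c x))).
Proof.
apply: (@le_integrable _ _ _ mu _ _ _ (EFin \o (fun x : R => r * x))).
- exact: measurable_itv.
- apply/measurable_EFinP.
  rewrite (_ : (fun x => r * (x * ind a c x)) = (fun x => r * x) \* \1_(`[a, c[ : set R)).
    apply: measurable_funM; last exact: measurable_indic.
    apply: measurable_funM; [exact: measurable_cst | exact: measurable_id].
  by apply/funext => x; rewrite /= indE mulrA.
- move=> x _; rewrite /= lee_fin mulrA normrM.
  by rewrite /ind; case: ifP => _; rewrite ?normr1 ?normr0 ?mulr1 ?mulr0.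
- apply: continuous_compact_integrable; first exact: segment_compact.
  apply: continuous_subspaceT => x.
  apply: continuousM; [exact: cvg_cst | exact: cvg_id].
Qed.

Lemma int_xind1 (R : realType) (a c : R) :
  mu.-integrable (@I01 R) (EFin \o (fun x => x * ind a c x)).
Proof.
have H := int_xind _ 1 a c. apply: eq_integrable H. exact: measurable_itv.
by move=> x _ /=; rewrite mul1r.
Qed.

Lemma series_div (R : realType) (u : nat -> R) (C : R) : 0 < C ->
  (forall j, 0 <= u j) -> (forall j, (0 < j)%N -> C <= u j) ->
  ~ (\sum_(0 <= j <oo) (u j)%:E < +oo)%E.
Proof.
move=> C0 u0 uC lt.
have Sge : forall n, ((n%:R * C)%:E <= \sum_(0 <= j <oo) (u j)%:E)%E.
  move=> n.
  have H := @nneseries_lim_ge R (fun j => (u j)%:E) xpredT 0%N n.+1 (fun i _ _ => (u0 i)).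
  apply: (le_trans _ H).
  rewrite big_nat_recl // sumEFin lee_fin.
  apply: (@le_trans _ _ (\sum_(0 <= i < n) u i.+1)); last by rewrite lerDr.
  rewrite mulr_natl -[X in C *+ X](subn0 n) -sumr_const_nat.
  by apply: ler_sum_nat => i _; exact: uC.
have S0 := Sge 0%N.
have Sfin : (\sum_(0 <= j <oo) (u j)%:E)%E \is a fin_num.
  by rewrite ge0_fin_numE // (le_trans _ S0) // mul0r.
set S := (\sum_(0 <= j <oo) _)%E in Sge Sfin.
have := Sge (Num.truncn (fine S / C)).+1.
rewrite -(fineK Sfin) lee_fin -ler_pdivlMr //.
rewrite /= => h; have := truncnS_gt (fine S / C); by rewrite ltNge h.
Qed.

Lemma wcoef0 (R : realType) (b j k : nat) : (2 <= b)%N -> (k < b ^ j)%N ->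
  wcoef b j.+1 0 k (fun x : R => x) =
  - ((b%:R - 1) / 2 * (b%:R : R) `^ (j.+1%:R / 2 - 1) * b%:R
      * ((b%:R : R) `^ (- j.+1%:R)) ^+ 2).
Proof.
move=> b2 kb.
rewrite /wcoef /haar /=.
set B : R := b%:R.
set P := B `^ (j.+1%:R / 2 - 1).
set h := B `^ (1 *- j.+1).
set H := B `^ (1 - j.+1%:R).
have B0 : 0 < B by rewrite /B ltr0n; apply: leq_trans b2.
have h0 : 0 < h by apply: powR_gt0.
have BH : H = B * h.
  rewrite /H /h -[1 - _]/(1 + (1 *- j.+1)) powRD; last by apply/implyP => _; rewrite gt_eqF.
  by rewrite powRr1 // ltW.
have hj : B * h = (B ^+ j)^-1.
  rewrite /h -[1 *- j.+1]/(- j.+1%:R) powR_invn; last exact: ltW.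
  by rewrite exprS invfM mulrA divff ?mul1r // gt_eqF.
have kb' : k%:R + 1 <= B ^+ j.
  by rewrite /B -natrX natr1 ler_nat.
have c2 : H * (k%:R + 1) <= 1.
  rewrite BH hj mulrC ler_pdivrMr ?mul1r //; exact: exprn_gt0.
rewrite BH in c2 *.
transitivity (Rintegral mu (@I01 R)
   (fun x => (P * B) * (x * ind (h * (B * k%:R + 0)) (h * (B * k%:R + 0 + 1)) x)
     - P * (x * ind (B * h * k%:R) (B * h * (k%:R + 1)) x))).
  by apply: eq_Rintegral => x _; ring.
rewrite RintegralB; [|exact: measurable_itv|exact: int_xind|exact: int_xind].
rewrite !RintegralZl; [|exact: measurable_itv|exact: int_xind1|exact: measurable_itv|exact: int_xind1].
rewrite !Rint_xind.
- by rewrite /=; ring.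
- by apply: mulr_ge0; [apply: mulr_ge0; apply: ltW|].
- by rewrite ltr_pM2l ?ltrDl // mulr_gt0.
- exact: c2.
- rewrite addr0; apply: mulr_ge0; [apply: ltW=>// | apply: mulr_ge0 => //; apply: ltW].
- by rewrite ltr_pM2l // ltrDl.
- apply: le_trans c2; rewrite addr0 [B * h]mulrC -mulrA ler_pM2l // mulrDr mulr1 lerD2l.
  by rewrite /B ler1n; apply: leq_trans b2.
Qed.

Lemma pD (R : realType) (B x y : R) : 0 < B -> B `^ (x + y) = B `^ x * B `^ y.
Proof. by move=> B0; rewrite powRD //; apply/implyP => _; rewrite gt_eqF. Qed.

Definition ee (R : realType) (j : nat) : R :=
  (j.+1%:R / 2 - 1) + 1 + (- j.+1%:R) + (- j.+1%:R).

Lemma absw (R : realType) (b j k : nat) : (2 <= b)%N -> (k < b ^ j)%N ->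
  `|wcoef b j.+1 0 k (fun x : R => x)| =
  ((b%:R - 1) / 2) * (b%:R : R) `^ (ee R j).
Proof.
move=> b2 kb; rewrite wcoef0 // normrN.
have B0 : 0 < (b%:R : R) by rewrite ltr0n; apply: leq_trans b2.
have B1 : 1 <= (b%:R : R) by rewrite ler1n; apply: leq_trans b2.
rewrite ger0_norm; last first.
  apply: mulr_ge0; last exact: exprn_ge0 (powR_ge0 _ _).
  apply: mulr_ge0; last exact: ltW.
  apply: mulr_ge0; last exact: powR_ge0.
  by apply: divr_ge0; rewrite ?subr_ge0.
rewrite -!mulrA; congr (_ * _).
rewrite /ee [in RHS]pD // [in RHS]pD // [in RHS]pD // powRr1 ?ltW // expr2.
by rewrite !mulrA.
Qed.

Lemma term_fin (R : realType) (b : nat) (r q al : R) (j : nat) :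
  (2 <= b)%N -> 1 <= r -> 0 <= q -> 1 <= al ->
  ((b%:R - 1) / 2) `^ q * (b%:R : R) `^ (- (q / r)) <=
  (b%:R : R) `^ (q * (al - invp r%:E + 2^-1) * j.+1%:R)
    * level_term b r%:E q (fun x : R => x) j.+1.
Proof.
move=> b2 r1 q0 al1.
have b0 : (0 < b)%N by apply: leq_trans b2.
have B0 : 0 < (b%:R : R) by rewrite ltr0n.
have B1 : 1 <= (b%:R : R) by rewrite ler1n.
have u0 : 0 <= ((b%:R : R) - 1) / 2 by apply: divr_ge0; rewrite ?subr_ge0.
have r0 : 0 < r by apply: lt_le_trans r1.
rewrite /level_term /nDelta /nNabla /invp.
set B : R := b%:R.
set u := (B - 1) / 2.
set w := u * B `^ ee R j.
set S := \sum_(k < b ^ j) _.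
have w0 : 0 <= w by apply: mulr_ge0 => //; exact: powR_ge0.
have SY : (b ^ j)%:R * w `^ r <= S.
  have : \sum_(k < b ^ j) w `^ r <= S.
    apply: ler_sum => k _.
    rewrite (bigD1 (Ordinal b0)) //= absw // ?ltn_ord // lerDl.
    by rewrite sumr_ge0 // => i _; exact: powR_ge0.
  by rewrite -(big_mkord xpredT (fun _ => w `^ r)) sumr_const_nat subn0 mulr_natl.
have Y0 : 0 <= (b ^ j)%:R * w `^ r by apply: mulr_ge0 => //; exact: powR_ge0.
apply: le_trans (_ : _ <= B `^ (q * (al - r^-1 + 2^-1) * j.+1%:R) *
                         ((b ^ j)%:R * w `^ r) `^ (q / r)) _; last first.
  apply: ler_wpM2l; first exact: powR_ge0.
  apply: ge0_ler_powR => //; first by apply: divr_ge0 => //; exact: ltW.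
  - by rewrite nnegrE (le_trans Y0 SY).
rewrite natrX -powR_mulrn; last exact: ltW.
rewrite powRM; [|exact: powR_ge0|exact: powR_ge0].
rewrite -!powRrM.
have -> : r * (q / r) = q by rewrite mulrC -mulrA mulVf ?mulr1 // gt_eqF.
rewrite /w powRM //; last exact: powR_ge0.
rewrite -powRrM -/B.
set W := q * _ * _.
have -> : B `^ W * (B `^ (j%:R * (q / r)) * (u `^ q * B `^ (ee R j * q)))
  = u `^ q * B `^ (W + (j%:R * (q / r) + ee R j * q)) by rewrite !pD //; ring.
apply: ler_wpM2l; first exact: powR_ge0.
apply: ler_powR => //.
have -> : W + (j%:R * (q / r) + ee R j * q)
   = q * (al - 1) * j.+1%:R - q / r.
  rewrite /W /ee -(@natr1 R j); field; by rewrite gt_eqF.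
rewrite lerDr; apply: mulr_ge0; last exact: ler0n.
by apply: mulr_ge0 => //; rewrite subr_ge0.
Qed.

Lemma term_inf (R : realType) (b : nat) (q al : R) (j : nat) :
  (2 <= b)%N -> 0 <= q -> 1 <= al ->
  ((b%:R - 1) / 2) `^ q <=
  (b%:R : R) `^ (q * (al - invp (+oo%E : \bar R) + 2^-1) * j.+1%:R)
    * level_term b +oo%E q (fun x : R => x) j.+1.
Proof.
move=> b2 q0 al1.
have b0 : (0 < b)%N by apply: leq_trans b2.
have bj0 : (0 < b ^ j)%N by rewrite expn_gt0 b0.
have B0 : 0 < (b%:R : R) by rewrite ltr0n.
have B1 : 1 <= (b%:R : R) by rewrite ler1n.
have u0 : 0 <= ((b%:R : R) - 1) / 2 by apply: divr_ge0; rewrite ?subr_ge0.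
rewrite /level_term /nDelta /nNabla /invp.
set B : R := b%:R.
set u := (B - 1) / 2.
set w := u * B `^ ee R j.
have w0 : 0 <= w by apply: mulr_ge0 => //; exact: powR_ge0.
set M := \big[Num.max/0]_(k < b ^ j) _.
have wM : w <= M.
  rewrite /M -(big_mkord xpredT (fun k : nat => \big[Num.max/0]_(i < b) `|wcoef b j.+1 i k (fun x : R => x)|)).
  rewrite (big_ltn bj0) le_max; apply/orP; left.
  rewrite -(big_mkord xpredT (fun i : nat => `|wcoef b j.+1 i 0 (fun x : R => x)|)).
  by rewrite (big_ltn b0) le_max absw // lexx.
apply: le_trans (_ : _ <= B `^ (q * (al - 0 + 2^-1) * j.+1%:R) * w `^ q) _; last first.
  apply: ler_wpM2l; first exact: powR_ge0.
  by apply: ge0_ler_powR => //; rewrite nnegrE // (le_trans w0 wM).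
rewrite /w powRM //; last exact: powR_ge0.
rewrite -powRrM mulrCA -pD //.
have -> : q * (al - 0 + 2^-1) * j.+1%:R + ee R j * q = q * (al - 1) * j.+1%:R.
  by rewrite /ee -(@natr1 R j); field.
rewrite -[X in X <= _]mulr1; apply: ler_wpM2l; first exact: powR_ge0.
rewrite -{1}(powRr0 B); apply: ler_powR => //.
apply: mulr_ge0; last exact: ler0n.
by apply: mulr_ge0 => //; rewrite subr_ge0.
Qed.

Lemma term_ge0 (R : realType) (b : nat) (x : R) (p : \bar R) (q : R) f j :
  0 <= (b%:R : R) `^ x * level_term b p q f j.
Proof.
apply: mulr_ge0; first exact: powR_ge0.
by rewrite /level_term; case: p => [r| |]; exact: powR_ge0.
Qed.

Lemma H1p_id (R : realType) {p : \bar R} : (1 <= p)%E -> H1p p (fun x : R => x).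
Proof.
move=> p1; exists 0, (fun _ => 1); split.
  split; first exact: measurable_cst.
  rewrite unlock.
  case: p p1 => [r| |] //= p1.
  - have r0 : r != 0 by rewrite gt_eqF // (lt_le_trans ltr01) // -lee_fin.
    apply: poweR_lty.
    apply: (@le_lt_trans _ _ (\int[mu]_x (\1_(@I01 R) x)%:E)%E).
      rewrite le_eqVlt; apply/orP; left; apply/eqP; apply: eq_integral.
      move=> x _; rewrite indicE; case: ifP => _ /=.
        by rewrite normr1 powR1.
      by rewrite normr0 powR0.
    rewrite integral_indic; last exact: measurable_itv.
    rewrite setIT /I01.
    change ((@lebesgue_measure R) ([set` `[0%R, 1%R]] : set R) < +oo)%E.
    rewrite lebesgue_measure_itv /=.
    by case: ifP => _; rewrite ?oppr0 ?adde0 ?ltey ?ltry.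
    exact: measurableT.
  - case: ifP => _ //.
    apply: (@le_lt_trans _ _ 1%E); last exact: ltey.
    apply/ess_sup_inf.ess_supP; apply: aeW => x /=.
    by rewrite lee_fin; case: ifP => _; rewrite ?normr1 ?normr0.
move=> x; rewrite /I01 inE /= in_itv /= => /andP[x0 x1].
rewrite Rintegral_cst; last exact: measurable_itv.
change (x = 0 + 1 * fine ((@lebesgue_measure R) ([set` `[0%R, x]] : set R))).
rewrite lebesgue_measure_itv /= lte_fin; case: (ltrP 0 x) => h /=.
- by rewrite add0r mul1r /= oppr0 addr0.
- by rewrite mulr0 addr0; apply/eqP; rewrite eq_le h x0.
Qed.

Theorem proposition1 (R : realType) (b : nat) (p : \bar R) (q : R) :
  (2 <= b)%N -> (1 <= p)%E -> 1 <= q ->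
  H1p p (fun x : R => x) /\
  (forall alpha : R, 1 <= alpha -> ~ Hwav b alpha p q (fun x : R => x)) /\
  (forall alpha : R, 1 <= alpha ->
     ~ (forall f : R -> R, H1p p f -> Hwav b alpha p q f)).
Proof.
move=> b2 p1 q1.
have H1 := @H1p_id R p p1.
have q0 : 0 <= q by apply: le_trans q1.
have B0 : 0 < (b%:R : R) by rewrite ltr0n; apply: leq_trans b2.
have u0 : 0 < ((b%:R : R) - 1) / 2.
  by apply: divr_gt0 => //; rewrite subr_gt0 ltr1n.
have H2 : forall alpha : R, 1 <= alpha -> ~ Hwav b alpha p q (fun x : R => x).
  move=> al al1 [_ Hs].
  case: p p1 H1 Hs => [r| |] // p1 _ Hs.
  - have r1 : 1 <= r by rewrite -lee_fin.
    have C0 : 0 < ((b%:R - 1) / 2) `^ q * (b%:R : R) `^ (- (q / r)).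
      by apply: mulr_gt0; apply: powR_gt0.
    apply: (@series_div R _ _ C0 _ _ Hs) => j.
      exact: term_ge0.
    case: j => // j _; exact: term_fin.
  - have C0 : 0 < (((b%:R : R) - 1) / 2) `^ q by apply: powR_gt0.
    apply: (@series_div R _ _ C0 _ _ Hs) => j.
      exact: term_ge0.
    case: j => // j _; exact: term_inf.
split; first exact: H1.
split; first exact: H2.
by move=> al al1 Hall; apply: (H2 al al1); apply: Hall.
Qed.
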